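(* There is an algorithm that, given integers $p,q\ge1$, decides whether there exist antipalindromic numbers $A,B$ with $p/q=A/B$.
   Context: A positive integer $n$ is antipalindromic if its binary representation $w=w_1\cdots w_L$ (most significant digit first, no leading zeros) has even length $L$ and satisfies $w_i+w_{L+1-i}=1$ for all $i$. *)

(* Defs.v *)
From mathcomp Require Import all_boot.
Set Implicit Arguments. Unset Strict Implicit. Unset Printing Implicit Defensive.

Definition bit (i n : nat) : nat := odd (n %/ 2 ^ i).

(* n is antipalindromic: its binary representation w_1..w_L (MSB first, no
   leading zeros) has even length L and w_i + w_{L+1-i} = 1.  With LSB-first
   indices j = L - i, the condition reads bit j n + bit (L-1-j) n = 1. *)
Definition antipalindromic (n : nat) : Prop :=
  exists L : nat, ~~ odd L /\ 2 ^ L.-1 <= n < 2 ^ L /\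
    forall j, j < L -> bit j n + bit (L.-1 - j) n = 1.

(* A model of computation: partial (mu-)recursive functions, used to state
   "there is an algorithm" without it being trivialized by classical axioms. *)
Inductive rec : Type :=
| RZero : rec
| RSucc : rec
| RProj : nat -> rec
| RComp : rec -> list rec -> rec
| RPrimRec : rec -> rec -> rec
| RMu : rec -> rec.

Inductive eval : rec -> seq nat -> nat -> Prop :=
| ev_zero xs : eval RZero xs 0
| ev_succ x xs : eval RSucc (x :: xs) x.+1
| ev_proj i xs : i < size xs -> eval (RProj i) xs (nth 0 xs i)
| ev_comp f gs xs ys y :
    evals gs xs ys -> eval f ys y -> eval (RComp f gs) xs y
| ev_pr0 f g xs y : eval f xs y -> eval (RPrimRec f g) (0 :: xs) y
| ev_prS f g n xs r y :
    eval (RPrimRec f g) (n :: xs) r -> eval g (n :: r :: xs) y ->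
    eval (RPrimRec f g) (n.+1 :: xs) y
| ev_mu f xs n :
    eval f (n :: xs) 0 ->
    (forall m, m < n -> exists k, 0 < k /\ eval f (m :: xs) k) ->
    eval (RMu f) xs n
with evals : list rec -> seq nat -> seq nat -> Prop :=
| evs_nil xs : evals nil xs nil
| evs_cons g gs xs y ys :
    eval g xs y -> evals gs xs ys -> evals (g :: gs) xs (y :: ys).

(* Main.v *)
Require Import Defs.
From mathcomp Require Import all_boot.
From Stdlib Require Import Setoid ZArith Lia.
From mathcomp Require Import all_boot zify.
Set Implicit Arguments. Unset Strict Implicit. Unset Printing Implicit Defensive.

Inductive expr : Type :=
| EVar of nat | EZero | ESucc of expr | EPR of expr & expr & expr
| EApp1 of expr & expr | EApp2 of expr & expr & expr.

Fixpoint den (e : expr) (xs : seq nat) : nat :=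
 match e with
 | EVar i => nth 0 xs i
 | EZero => 0
 | ESucc e => (den e xs).+1
 | EPR e0 eS en => nat_rec (fun _ => nat) (den e0 xs) (fun n r => den eS [:: n, r & xs]) (den en xs)
 | EApp1 f e1 => den f [:: den e1 xs]
 | EApp2 f e1 e2 => den f [:: den e1 xs; den e2 xs]
 end.

Fixpoint comp (k : nat) (e : expr) : rec :=
 match e with
 | EVar i => if i < k then RProj i else RZero
 | EZero => RZero
 | ESucc e => RComp RSucc [:: comp k e]
 | EPR e0 eS en => RComp (RPrimRec (comp k e0) (comp k.+2 eS)) (comp k en :: map RProj (iota 0 k))
 | EApp1 f e1 => RComp (comp 1 f) [:: comp k e1]
 | EApp2 f e1 e2 => RComp (comp 2 f) [:: comp k e1; comp k e2]
 end.

Lemma evZ xs y : eval RZero xs y <-> y = 0.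
Proof. split; [by move=> H; inversion H | move->; constructor]. Qed.

Lemma evP i xs y : eval (RProj i) xs y <-> i < size xs /\ y = nth 0 xs i.
Proof. split; [by move=> H; inversion H | by move=> [H ->]; constructor]. Qed.

Lemma evC f gs xs y : eval (RComp f gs) xs y <-> exists ys, evals gs xs ys /\ eval f ys y.
Proof. split; [by move=> H; inversion H; eauto | by move=> [ys [H1 H2]]; econstructor; eauto]. Qed.

Lemma evsN xs ys : evals nil xs ys <-> ys = nil.
Proof. split; [by move=> H; inversion H | move->; constructor]. Qed.

Lemma evsC g gs xs ys : evals (g :: gs) xs ys <->
  exists y ys', ys = y :: ys' /\ eval g xs y /\ evals gs xs ys'.
Proof.
split; [by move=> H; inversion H; subst; eauto |].
by move=> [y [ys' [-> [H1 H2]]]]; constructor.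
Qed.

Lemma evS xs y : eval RSucc xs y <-> exists x xs', xs = x :: xs' /\ y = x.+1.
Proof. split; [by move=> H; inversion H; eauto | by move=> [x [xs' [-> ->]]]; constructor]. Qed.

Lemma evPR0 f g xs y : eval (RPrimRec f g) (0 :: xs) y <-> eval f xs y.
Proof. split; [by move=> H; inversion H | by move=> H; constructor]. Qed.

Lemma evPRS f g n xs y : eval (RPrimRec f g) (n.+1 :: xs) y <->
  exists r, eval (RPrimRec f g) (n :: xs) r /\ eval g [:: n, r & xs] y.
Proof.
split; [by move=> H; inversion H; subst; eauto |].
by move=> [r [H1 H2]]; econstructor; eauto.
Qed.

Lemma evs_proj xs t s ys : s + t <= size xs ->
  (evals (map RProj (iota s t)) xs ys <-> ys = [seq nth 0 xs i | i <- iota s t]).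
Proof.
elim: t s ys => [|t IH] s ys Hs /=; first exact: evsN.
rewrite evsC; split.
  move=> [y [ys' [-> [/evP [_ ->] /IH H]]]]. rewrite H //. by rewrite addSnnS.
move=> ->; do 2 eexists; split; first reflexivity; split.
  by apply/evP; split => //; apply: leq_trans Hs; rewrite addnS ltnS leq_addr.
by apply/IH => //; rewrite addSnnS.
Qed.

Lemma evs_all xs ys : evals (map RProj (iota 0 (size xs))) xs ys <-> ys = xs.
Proof. by rewrite evs_proj // -/(mkseq _ _) mkseq_nth. Qed.

Lemma evs_allk xs k ys : size xs = k -> (evals (map RProj (iota 0 k)) xs ys <-> ys = xs).
Proof. by move<-; apply: evs_all. Qed.

Lemma comp_ok e : forall k xs, size xs = k -> forall y, eval (comp k e) xs y <-> y = den e xs.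
Proof.
elim: e => [i|| e IH| e0 IH0 eS IHS en IHn | f IHf e1 IH1 | f IHf e1 IH1 e2 IH2] k xs Hk y /=.
- case: ifP => Hi; first by rewrite evP Hk Hi; split => [[]|]//.
  by rewrite evZ nth_default // Hk leqNgt Hi.
- exact: evZ.
- rewrite evC; split.
    move=> [ys [/evsC [y1 [ys' [-> [/(IH k xs Hk) -> /evsN ->]]]] /evS [x [xs' [[-> _] ->]]]]] //.
  move=> ->; exists [:: den e xs]; split; last by apply/evS; eauto.
  by apply/evsC; do 2 eexists; split; first reflexivity; split; [apply/(IH k xs Hk)|apply/evsN].
- have Hrec : forall n y, eval (RPrimRec (comp k e0) (comp k.+2 eS)) (n :: xs) y <->
     y = nat_rec (fun _ => nat) (den e0 xs) (fun n r => den eS [:: n, r & xs]) n.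
    elim=> [|n IHr] z; first by rewrite evPR0 (IH0 k xs Hk).
    have HS : forall r, size [:: n, r & xs] = k.+2 by move=> r /=; rewrite Hk.
    rewrite evPRS /=; split.
      by move=> [r [/IHr -> /(IHS _ _ (HS _)) ->]].
    move=> ->; eexists; split; first by apply/IHr.
    by apply/(IHS _ _ (HS _)).
  rewrite evC; split.
    move=> [ys [/evsC [y1 [ys' [-> [/(IHn k xs Hk) Hy1 ]]]]]].
    move=> /(evs_allk _ Hk) ->; rewrite Hy1 => /Hrec //.
  move=> ->; eexists; split; last by apply/Hrec.
  apply/evsC; do 2 eexists; split; first reflexivity; split; first by apply/(IHn k xs Hk).
  exact/(evs_allk _ Hk).
- rewrite evC; split.
    by move=> [ys [/evsC [y1 [ys' [-> [/(IH1 k xs Hk) -> /evsN ->]]]]] /(IHf 1 [:: _] erefl) ->].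
  move=> ->; eexists; split; last by apply/(IHf 1 [:: _] erefl).
  by apply/evsC; do 2 eexists; split; first reflexivity; split; [apply/(IH1 k xs Hk)|apply/evsN].
- rewrite evC; split.
    move=> [ys [/evsC [y1 [ys' [-> [/(IH1 k xs Hk) -> /evsC [y2 [ys2 [-> [/(IH2 k xs Hk) -> /evsN ->]]]]]]]]] /(IHf 2 [:: _; _] erefl) ->] //.
  move=> ->; eexists; split; last by apply/(IHf 2 [:: _; _] erefl).
  apply/evsC; do 2 eexists; split; first reflexivity; split; first by apply/(IH1 k xs Hk).
  apply/evsC; do 2 eexists; split; first reflexivity; split; first by apply/(IH2 k xs Hk).
  exact/evsN.
Qed.

Fixpoint vall (s : seq bool) : nat := if s is b :: s' then b + 2 * vall s' else 0.
Definition cr (s : seq bool) := map negb (rev s).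
Definition anti (u : seq bool) := u ++ cr u.
Definition good (u : seq bool) := ~~ head true u.

Lemma vall_cat s t : vall (s ++ t) = vall s + 2 ^ size s * vall t.
Proof. elim: s => [|b s IH] /=; first by rewrite add0n mul1n. rewrite IH expnS. lia. Qed.

Lemma vall_lt s : vall s < 2 ^ size s.
Proof. elim: s => [|b s IH] //=. rewrite expnS. case: b => /=; lia. Qed.

Lemma vall_ge s : last false s -> 2 ^ (size s).-1 <= vall s.
Proof.
elim: s => [|b s IH] //=. case: s IH => [|c s] IH /=; first by case: b.
move=> /IH /= H. rewrite expnS. lia.
Qed.

Lemma size_cr s : size (cr s) = size s.
Proof. by rewrite /cr size_map size_rev. Qed.

Lemma cr_cat s t : cr (s ++ t) = cr t ++ cr s.
Proof. by rewrite /cr rev_cat map_cat. Qed.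

Lemma anti_cat s t : anti (s ++ t) = s ++ anti t ++ cr s.
Proof. by rewrite /anti cr_cat !catA. Qed.

Lemma size_anti u : size (anti u) = (size u).*2.
Proof. by rewrite /anti size_cat size_cr addnn. Qed.

Lemma last_anti u : good u -> last false (anti u).
Proof.
case: u => [|b u] //= Hb. rewrite /anti /cr rev_cons map_rcons /= last_cat last_rcons //.
Qed.

Lemma vall_decomp s t : vall (anti (s ++ t)) =
  vall s + 2 ^ size s * vall (anti t) + 2 ^ size s * 2 ^ (size t).*2 * vall (cr s).
Proof. rewrite anti_cat !vall_cat size_anti. lia. Qed.

Definition lo s i := vall (take i s).
Definition mid s i := vall (anti (drop i s)).
Definition hi s i := vall (cr (take i s)).

Lemma decomp s i : i <= size s ->
  vall (anti s) = lo s i + 2 ^ i * mid s i + 2 ^ i * 2 ^ (size s - i).*2 * hi s i.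
Proof.
move=> Hi. by rewrite -{1}(cat_take_drop i s) vall_decomp size_takel // size_drop.
Qed.

Lemma lo_lt s i : lo s i < 2 ^ i.
Proof.
rewrite /lo. apply: leq_trans (vall_lt _) _. rewrite leq_exp2l // size_take.
by case: ltnP => // /ltnW.
Qed.

Lemma mid_lt s i : mid s i < 2 ^ (size s - i).*2.
Proof. by have := vall_lt (anti (drop i s)); rewrite size_anti size_drop. Qed.

Local Open Scope Z_scope.
Section Pump.
Variables (p q : nat) (u w : seq bool).
Hypotheses (Hp : (0 < p)%N) (Hq : (0 < q)%N) (Hnm : (size u <= size w)%N)
  (Hgu : good u) (Hgw : good w)
  (Heq : (p * vall (anti u) = q * vall (anti w))%N).

Definition dd := (size w - size u)%N.
Definition Yv i : Z := Z.of_nat q * Z.of_nat (hi w i) * Z.of_nat (2 ^ dd.*2) - Z.of_nat p * Z.of_nat (hi u i).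
Definition Cv i : Z := Z.of_nat (2 ^ (size u - i).*2) * Yv i
   - (Z.of_nat p * Z.of_nat (mid u i) - Z.of_nat q * Z.of_nat (mid w i)).

Lemma F1 i : (i <= size u)%N ->
  Z.of_nat p * Z.of_nat (lo u i) - Z.of_nat q * Z.of_nat (lo w i) = Z.of_nat (2 ^ i) * Cv i.
Proof.
move=> Hi.
have dB := decomp Hi. have dA := decomp (leq_trans Hi Hnm).
have E : (2 ^ (size w - i).*2 = 2 ^ (size u - i).*2 * 2 ^ dd.*2)%N.
  by rewrite -expnD -doubleD /dd; congr (expn 2 (double _)); lia.
rewrite E in dA. rewrite /Cv /Yv.
move: Heq. rewrite dB dA. 
set a1 := lo u i. set a2 := lo w i. set m1 := mid u i. set m2 := mid w i.
set h1 := hi u i. set h2 := hi w i. set P := (2 ^ i)%N. set Q := (2 ^ _)%N. set D := (2 ^ dd.*2)%N.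
clearbody a1 a2 m1 m2 h1 h2 P Q D. move=> H. lia.
Qed.

Lemma F2 i : (i <= size u)%N -> - Z.of_nat q < Cv i < Z.of_nat p.
Proof.
move=> Hi. have H := F1 Hi. have L1 := lo_lt u i. have L2 := lo_lt w i.
have P0 : (0 < 2 ^ i)%N by rewrite expn_gt0.
move: H L1 L2 P0. set a1 := lo u i. set a2 := lo w i. set P := (2 ^ i)%N. set C := Cv i.
clearbody a1 a2 P C. move=> H L1 L2 P0. nia.
Qed.

Lemma good_size s : good s -> (0 < size s)%N.
Proof. by case: s. Qed.

Lemma Dbound : (q * 2 ^ dd.*2 < 2 * p)%N.
Proof.
have A1 := vall_ge (last_anti Hgw). have B1 := vall_lt (anti u).
rewrite !size_anti in A1 B1.
have m0 := good_size Hgw.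
have E1 : (2 ^ (size w).*2 = 2 * 2 ^ (size w).*2.-1)%N.
  by rewrite -expnS prednK // double_gt0.
have E2 : (2 ^ (size w).*2 = 2 ^ (size u).*2 * 2 ^ dd.*2)%N.
  by rewrite -expnD -doubleD /dd; congr (expn 2 (double _)); lia.
move: E1 E2 A1 B1 Heq. set X := (2 ^ (size u).*2)%N. set D := (2 ^ dd.*2)%N.
set H := (2 ^ _.-1)%N. set M := (2 ^ (size w).*2)%N.
set A := vall (anti w). set B := vall (anti u).
clearbody X D H M A B. move=> E1 E2 A1 B1 E.
have : (q * M <= 2 * p * B)%N.
  rewrite E1 mulnCA -mulnA E leq_pmul2l //; exact: leq_mul.
have : (2 * p * B < 2 * p * X)%N by rewrite ltn_pmul2l //; lia.
rewrite E2. nia.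
Qed.

Lemma F3 i : (i <= size u)%N -> - Z.of_nat q - 2 * Z.of_nat p < Yv i < 2 * Z.of_nat p.
Proof.
move=> Hi. have [C1 C2] := F2 Hi. have DB := Dbound.
have M1 := mid_lt u i. have M2 := mid_lt w i.
have E2 : (2 ^ (size w - i).*2 = 2 ^ (size u - i).*2 * 2 ^ dd.*2)%N.
  by rewrite -expnD -doubleD /dd; congr (expn 2 (double _)); lia.
rewrite E2 in M2.
have Q0 : (0 < 2 ^ (size u - i).*2)%N by rewrite expn_gt0.
move: C1 C2 DB M1 M2 Q0. rewrite /Cv.
set Y := Yv i. set Q := (2 ^ (size u - i).*2)%N. set D := (2 ^ dd.*2)%N.
set m1 := mid u i. set m2 := mid w i.
clearbody Y Q D m1 m2. move=> C1 C2 DB M1 M2 Q0.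
have h1 : (Q * (q * D) <= Q * (2 * p - 1))%N by rewrite leq_pmul2l //; lia.
split; nia.
Qed.

Lemma pump i j : (i < j)%N -> (j <= size u)%N -> Cv i = Cv j -> Yv i = Yv j ->
  (p * vall (anti (take i u ++ drop j u)) = q * vall (anti (take i w ++ drop j w)))%N.
Proof.
move=> Hij Hj Hc Hy.
have Hi : (i <= size u)%N by lia.
have Hjw : (j <= size w)%N by lia.
have H1 := F1 Hi. rewrite Hc /Cv -Hy /Yv in H1.
rewrite !vall_decomp !size_takel ?(leq_trans Hi Hnm) // !size_drop.
have E2 : (2 ^ (size w - j).*2 = 2 ^ (size u - j).*2 * 2 ^ dd.*2)%N.
  by rewrite -expnD -doubleD /dd; congr (expn 2 (double _)); lia.
rewrite E2.
move: H1. rewrite /lo /mid /hi.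
set a1 := vall (take i u). set a2 := vall (take i w). set m1 := vall (anti (drop j u)).
set m2 := vall (anti (drop j w)). set h1 := vall (cr (take i u)). set h2 := vall (cr (take i w)).
set P := (2 ^ i)%N. set Q := (2 ^ (size u - j).*2)%N. set D := (2 ^ dd.*2)%N.
clearbody a1 a2 m1 m2 h1 h2 P Q D. move=> H. lia.
Qed.
End Pump.
Local Close Scope Z_scope.


Lemma head_take_drop (u : seq bool) i j : (0 < i)%N -> (i <= size u)%N ->
  head true (take i u ++ drop j u) = head true u.
Proof. by case: u => [|b u] //; case: i. Qed.

Lemma good_cut (u : seq bool) i j : (0 < i)%N -> (i <= size u)%N -> good u ->
  good (take i u ++ drop j u).
Proof. by move=> *; rewrite /good head_take_drop. Qed.

Definition N0 (p q : nat) := ((p + q) * (q + 4 * p))%N.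

Lemma short_step p q u w : (0 < p)%N -> (0 < q)%N -> (size u <= size w)%N -> good u -> good w ->
  (p * vall (anti u) = q * vall (anti w))%N -> (N0 p q < size u)%N ->
  exists i j, [/\ (0 < i)%N, (i < j)%N, (j <= size u)%N, Cv p q u w i = Cv p q u w j
        & Yv p q u w i = Yv p q u w j].
Proof.
move=> Hp Hq Hnm Hgu Hgw Heq Hn.
pose enc i := (Z.to_nat (Cv p q u w i + Z.of_nat q), Z.to_nat (Yv p q u w i + Z.of_nat (q + 2 * p))).
pose s := map enc (iota 1 (N0 p q).+1).
have Hnu : ~~ uniq s.
  apply/negP => Hu.
  suff Hsub : {subset s <= [seq (a, b) | a <- iota 0 (p + q), b <- iota 0 (q + 4 * p)]}.
    by have := uniq_leq_size Hu Hsub; rewrite size_allpairs !size_iota size_map size_iota -/(N0 p q) ltnn.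
  move=> x /mapP [i]; rewrite mem_iota => /andP [Hi1 Hi2] ->.
  have Hi : (i <= size u)%N by lia.
  have [C1 C2] := F2 Hp Hq Hnm Hgu Hgw Heq Hi. have [Y1 Y2] := F3 Hp Hq Hnm Hgu Hgw Heq Hi.
  rewrite /enc. set c1 := Z.to_nat _. set c2 := Z.to_nat _.
  have B1 : (c1 < p + q)%N by rewrite /c1; lia.
  have B2 : (c2 < q + 4 * p)%N by rewrite /c2; lia.
  clearbody c1 c2.
  by apply/allpairsP; exists (c1, c2); rewrite /= !mem_iota; split.
have /uniqPn := Hnu => /(_ (0, 0)%N) [a [b [Hab Hb]]].
rewrite size_map size_iota in Hb.
rewrite !(nth_map 0%N) ?size_iota // ?(ltn_trans Hab) // !nth_iota ?(ltn_trans Hab) //.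
rewrite /enc => [[E1 E2]].
have Ha1 : (1 + a <= size u)%N by lia.
have Hb1 : (1 + b <= size u)%N by lia.
have [C1 _] := F2 Hp Hq Hnm Hgu Hgw Heq Ha1. have [Y1 _] := F3 Hp Hq Hnm Hgu Hgw Heq Ha1.
have [C1' _] := F2 Hp Hq Hnm Hgu Hgw Heq Hb1. have [Y1' _] := F3 Hp Hq Hnm Hgu Hgw Heq Hb1.
exists (1 + a)%N, (1 + b)%N; split => //; lia.
Qed.

Lemma short p q : (0 < p)%N -> (0 < q)%N -> forall k u w, (size u <= k)%N ->
  (size u <= size w)%N -> good u -> good w ->
  (p * vall (anti u) = q * vall (anti w))%N ->
  exists u' w', [/\ good u', good w', (size u' <= N0 p q)%N, (size u' <= size w')%N &
     (p * vall (anti u') = q * vall (anti w'))%N].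
Proof.
move=> Hp Hq; elim=> [|k IH] u w Hk Hnm Hgu Hgw Heq.
  by move: (good_size Hgu); rewrite leqn0 in Hk; rewrite (eqP Hk).
case: (leqP (size u) (N0 p q)) => Hn; first by exists u, w.
have [i [j [Hi Hij Hj Hc Hy]]] := short_step Hp Hq Hnm Hgu Hgw Heq Hn.
have Hjw : (j <= size w)%N by lia.
apply: (IH (take i u ++ drop j u) (take i w ++ drop j w)).
- rewrite size_cat size_takel ?size_drop; lia.
- rewrite !size_cat !size_takel ?size_drop; lia.
- apply: good_cut => //; lia.
- apply: good_cut => //; lia.
- exact: pump Hp Hq Hnm Hgu Hgw Heq i j Hij Hj Hc Hy.
Qed.

Lemma bit_vall s j : bit j (vall s) = nth false s j.
Proof.
rewrite /bit. elim: s j => [|b s IH] j /=; first by rewrite div0n nth_nil.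
case: j => [|j]; first by rewrite divn1 oddD oddM /=; case: b.
rewrite expnS mulnC divnMA -IH; congr (nat_of_bool (odd (_ %/ _))).
rewrite divnDMl //; case: b => //=.
Qed.

Lemma crK s : cr (cr s) = s.
Proof. rewrite /cr -map_rev revK -map_comp map_id_in // => x _ /=; by rewrite negbK. Qed.

Lemma cr_anti u : cr (anti u) = anti u.
Proof. by rewrite /anti cr_cat crK. Qed.

Fixpoint mkbits L n := if L is L'.+1 then odd n :: mkbits L' n./2 else [::].

Lemma size_mkbits L n : size (mkbits L n) = L.
Proof. by elim: L n => //= L IH n; rewrite IH. Qed.



Lemma vall_mkbits L n : n < 2 ^ L -> vall (mkbits L n) = n.
Proof.
elim: L n => [|L IH] n /=; first by rewrite expn0 ltnS leqn0 => /eqP ->.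
move=> Hn. rewrite IH; last by rewrite -divn2 ltn_divLR // -expnSr.
by rewrite -{3}(odd_double_half n) -muln2 mulnC.
Qed.

Lemma vall_bits (s : seq bool) : mkbits (size s) (vall s) = s.
Proof.
elim: s => [|b s IH] //=. rewrite oddD oddM andFb addbF.
have -> : (b + 2 * vall s)./2 = vall s by case: b => /=; lia.
by rewrite IH; case: b.
Qed.

Lemma antiP n : antipalindromic n <-> exists u, good u /\ n = vall (anti u).
Proof.
split.
- move=> [L [HL [/andP [H1 H2] Hb]]].
  have L0 : 0 < L by case: L H1 H2 {HL Hb} => //=; rewrite expn0; lia.
  set k := L./2.
  have Lk : L = k.*2 by rewrite /k -[L in LHS]odd_double_half (negbTE HL) add0n.
  set s := mkbits L n.
  have Hs : n = vall s by rewrite /s vall_mkbits.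
  have Hns : forall j, nth false s j = odd (n %/ 2 ^ j).
    by move=> j; have := bit_vall s j; rewrite -Hs /bit; case: odd; case: nth.
  exists (take k s).
  have ks : k <= size s by rewrite size_mkbits Lk -addnn leq_addr.
  have Hanti : anti (take k s) = s.
    apply: (@eq_from_nth _ false); first by rewrite size_anti size_takel // size_mkbits Lk.
    rewrite size_anti size_takel // => j Hj.
    rewrite /anti nth_cat size_takel //. case: ltnP => Hjk.
      by rewrite nth_take.
    rewrite /cr (nth_map false) ?size_rev ?size_takel //; last by lia.
    rewrite nth_rev ?size_takel //; last by lia.
    rewrite nth_take; last by lia.
    have := Hb j ltac:(by rewrite Lk).
    rewrite /bit -!Hns.
    have -> : (L.-1 - j = k - (j - k).+1) by lia.
    by case: (nth false s j); case: (nth false s _).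
  split; last by rewrite Hanti.
  rewrite /good.
  have : head true (take k s) = nth false s 0.
    by case: (s) ks => [|b t] /=; [ rewrite leqn0 => /eqP Hk; lia | case: (k) Lk => //; lia].
  move=> ->. rewrite Hns expn0 divn1.
  have := Hb 0 L0. rewrite /bit expn0 divn1 subn0.
  have -> : n %/ 2 ^ L.-1 = 1.
    apply/eqP; rewrite eqn_leq -ltnS ltn_divLR ?expn_gt0 // leq_divRL ?expn_gt0 // mul1n H1 andbT.
    by rewrite -expnS prednK.
  by case: (odd n).
- move=> [u [Hg ->]]. exists (size u).*2.
  have u0 := good_size Hg.
  split; first by rewrite odd_double.
  split.
    have := vall_ge (last_anti Hg). have := vall_lt (anti u). rewrite size_anti => -> ->. done.
  move=> j Hj. rewrite !bit_vall.
  have Hj' : j < size (anti u) by rewrite size_anti.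
  rewrite -{2}cr_anti /cr (nth_map false) ?size_rev //; last by rewrite size_anti; lia.
  rewrite nth_rev; last by rewrite size_anti; lia.
  rewrite size_anti. have -> : (size u).*2 - ((size u).*2.-1 - j).+1 = j by lia.
  by case: nth.
Qed.

Definition G p q := 2 * (N0 p q + N0 q p + p + q).

Lemma short_bound p q u w : 0 < p -> 0 < q -> size u <= size w -> good u -> good w ->
  p * vall (anti u) = q * vall (anti w) ->
  exists u' w', [/\ good u', good w', size u' <= N0 p q + p, size w' <= N0 p q + p &
     p * vall (anti u') = q * vall (anti w')].
Proof.
move=> Hp Hq Hnm Hgu Hgw Heq.
have [u' [w' [Hu Hw Hs Hs' He]]] := short Hp Hq (leqnn _) Hnm Hgu Hgw Heq.
have Db := Dbound Hp Hq Hs' Hu Hw He.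
have : dd u' w' < p.
  have := ltn_expl (dd u' w').*2 (isT : 1 < 2). have := leq_pmull (2 ^ (dd u' w').*2) Hq. lia.
rewrite /dd => Hd.
exists u', w'; split => //; lia.
Qed.

Lemma vall_anti_lt u k : size u <= k -> vall (anti u) < 2 ^ k.*2.
Proof.
move=> H; apply: leq_trans (vall_lt _) _; rewrite size_anti leq_exp2l //; lia.
Qed.

Lemma bounded p q : 0 < p -> 0 < q ->
  (exists A B, antipalindromic A /\ antipalindromic B /\ p * B = q * A) ->
  exists A B, [/\ A < 2 ^ G p q, B < 2 ^ G p q, antipalindromic A, antipalindromic B &
     p * B = q * A].
Proof.
move=> Hp Hq [A [B [/antiP [w [Hw ->]] [/antiP [u [Hu ->]] He]]]].
case: (leqP (size u) (size w)) => Hnm.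
  have [u' [w' [Hu' Hw' H1 H2 He']]] := short_bound Hp Hq Hnm Hu Hw He.
  exists (vall (anti w')), (vall (anti u')); split => //; try (apply/antiP; by eauto).
    apply: leq_trans (vall_anti_lt H2) _; rewrite leq_exp2l // /G; lia.
  apply: leq_trans (vall_anti_lt H1) _; rewrite leq_exp2l // /G; lia.
have [w' [u' [Hw' Hu' H1 H2 He']]] := short_bound Hq Hp (ltnW Hnm) Hw Hu (esym He).
exists (vall (anti w')), (vall (anti u')); split => //; try (apply/antiP; by eauto).
  apply: leq_trans (vall_anti_lt H1) _; rewrite leq_exp2l // /G; lia.
apply: leq_trans (vall_anti_lt H2) _; rewrite leq_exp2l // /G; lia.
Qed.

Definition eone := ESucc EZero.
Definition eadd := EPR (EVar 1) (ESucc (EVar 1)) (EVar 0).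
Lemma den_add a b : den eadd [:: a; b] = a + b.
Proof. by elim: a => //= a ->. Qed.
Opaque eadd.

Definition emul := EPR EZero (EApp2 eadd (EVar 1) (EVar 3)) (EVar 0).
Lemma den_mul a b : den emul [:: a; b] = a * b.
Proof. elim: a => //= a ->. rewrite den_add mulSn; lia. Qed.
Opaque emul.

Definition epred := EPR EZero (EVar 0) (EVar 0).
Lemma den_pred a : den epred [:: a] = a.-1.
Proof. by case: a. Qed.
Opaque epred.

Definition esub := EPR (EVar 0) (EApp1 epred (EVar 1)) (EVar 1).
Lemma den_sub a b : den esub [:: a; b] = a - b.
Proof. elim: b => /= [|b ->]; [by rewrite subn0 | by rewrite den_pred subnS]. Qed.
Opaque esub.

Definition ele := EApp2 esub eone (EApp2 esub (EVar 0) (EVar 1)).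
Lemma den_le a b : den ele [:: a; b] = (a <= b).
Proof. rewrite /= !den_sub. case: leqP => H; lia. Qed.
Opaque ele.

Definition eeq := EApp2 emul (EApp2 ele (EVar 0) (EVar 1)) (EApp2 ele (EVar 1) (EVar 0)).
Lemma den_eq a b : den eeq [:: a; b] = (a == b).
Proof. by rewrite /= !den_le den_mul mulnb eqn_leq. Qed.
Opaque eeq.

Definition epow2 := EPR eone (EApp2 eadd (EVar 1) (EVar 1)) (EVar 0).
Lemma den_pow2 a : den epow2 [:: a] = 2 ^ a.
Proof. elim: a => //= a ->. rewrite den_add expnS; lia. Qed.
Opaque epow2.

Definition eodd := EPR EZero (EApp2 esub eone (EVar 1)) (EVar 0).
Lemma den_odd a : den eodd [:: a] = odd a.
Proof. elim: a => //= a ->. rewrite den_sub; by case: odd. Qed.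
Opaque eodd.

Definition ehalf := EPR EZero (EApp2 eadd (EVar 1) (EApp1 eodd (EVar 0))) (EVar 0).
Lemma den_half a : den ehalf [:: a] = a./2.
Proof. elim: a => //= a ->. rewrite den_add den_odd uphalf_half addnC //. Qed.
Opaque ehalf.

Definition eshr := EPR (EVar 0) (EApp1 ehalf (EVar 1)) (EVar 1).
Lemma den_shr n j : den eshr [:: n; j] = n %/ 2 ^ j.
Proof. elim: j => /= [|j ->]; first by rewrite divn1. by rewrite den_half -divn2 -divnMA expnSr. Qed.
Opaque eshr.

Definition ebit := EApp1 eodd (EApp2 eshr (EVar 1) (EVar 0)).
Lemma den_bit j n : den ebit [:: j; n] = bit j n.
Proof. by rewrite /= den_shr den_odd. Qed.
Opaque ebit.

Definition bsum body bnd := EPR EZero (EApp2 eadd (EVar 1) body) bnd.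
Lemma den_bsum body bnd xs g : (forall i r, den body [:: i, r & xs] = g i) ->
  den (bsum body bnd) xs = \sum_(i < den bnd xs) g i.
Proof.
move=> H /=. elim: (den bnd xs) => [|N IH] /=; first by rewrite big_ord0.
by rewrite den_add IH H big_ord_recr.
Qed.

Lemma sum_all N (b : 'I_N -> bool) : (\sum_(i < N) (b i : nat) == N) = [forall i, b i].
Proof.
have E : \sum_(i < N) (b i : nat) + \sum_(i < N) (~~ b i : nat) = N.
  rewrite -big_split /= -[RHS]card_ord -sum1_card. apply: eq_bigr => i _. by case: (b i).
apply/eqP/forallP => [H i | H].
  have : \sum_(i < N) (~~ b i : nat) == 0 by lia.
  by rewrite sum_nat_eq0 => /forallP /(_ i); case: (b i).
suff : \sum_(i < N) (~~ b i : nat) = 0 by lia.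
by apply/eqP; rewrite sum_nat_eq0; apply/forallP => i; rewrite H.
Qed.

Lemma sum_ex N (b : 'I_N -> bool) : (0 < \sum_(i < N) (b i : nat)) = [exists i, b i].
Proof.
rewrite lt0n sum_nat_eq0 negb_forall; apply: eq_existsb => i; by case: (b i).
Qed.
Opaque bsum.

Definition allb L n := [forall j : 'I_L, bit j n + bit (L.-1 - j) n == 1].
Definition antib n := [exists L : 'I_n.+1, [&& ~~ odd L, 2 ^ L.-1 <= n, n < 2 ^ L & allb L n]].

Definition ebodyj := EApp2 eeq (EApp2 eadd (EApp2 ebit (EVar 0) (EVar 3))
   (EApp2 ebit (EApp2 esub (EApp1 epred (EVar 2)) (EVar 0)) (EVar 3))) eone.
Definition eallb := EApp2 eeq (bsum ebodyj (EVar 0)) (EVar 0).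
Lemma den_allb L n : den eallb [:: L; n] = allb L n.
Proof.
rewrite /= den_eq (@den_bsum _ _ _ (fun j : nat => (bit j n + bit (L.-1 - j) n == 1 : nat))).
  by rewrite sum_all.
by move=> i r; rewrite /= den_eq den_add !den_bit den_sub den_pred.
Qed.
Opaque eallb.

Definition ebodyL := EApp2 emul (EApp2 emul (EApp2 emul (EApp2 esub eone (EApp1 eodd (EVar 0)))
   (EApp2 ele (EApp1 epow2 (EApp1 epred (EVar 0))) (EVar 2)))
   (EApp2 ele (ESucc (EVar 2)) (EApp1 epow2 (EVar 0)))) (EApp2 eallb (EVar 0) (EVar 2)).
Definition eanti := EApp2 ele eone (bsum ebodyL (ESucc (EVar 0))).
Lemma den_anti n : den eanti [:: n] = antib n.
Proof.
rewrite /= den_le (@den_bsum _ _ _ (fun L : nat =>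
   ([&& ~~ odd L, 2 ^ L.-1 <= n, n < 2 ^ L & allb L n] : nat))).
  by rewrite /= sum_ex.
move=> i r; rewrite /= !den_mul den_sub den_odd !den_le !den_pow2 den_pred den_allb.
by case: odd; case: (2 ^ i.-1 <= n); case: (n < 2 ^ i); case: allb.
Qed.
Opaque eanti.

Lemma antibP n : antib n <-> antipalindromic n.
Proof.
split.
  move=> /existsP [[L HL]] /= /and4P [H1 H2 H3 /forallP H4].
  exists L; split => //; split; first by rewrite H2 H3.
  by move=> j Hj; apply/eqP; exact: (H4 (Ordinal Hj)).
move=> [L [H1 [/andP [H2 H3] H4]]].
have HL : L < n.+1.
  move: H2; clear; case: L => // L /= H. rewrite ltnS. apply: leq_trans H.
  exact: ltn_expl.
apply/existsP; exists (Ordinal HL); rewrite /= H1 H2 H3 /=.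
by apply/forallP => j; apply/eqP; apply: H4.
Qed.

Definition two := ESucc (ESucc EZero).
Definition four := ESucc (ESucc two).
Definition eN0 x y := EApp2 emul (EApp2 eadd x y) (EApp2 eadd y (EApp2 emul four x)).
Definition eG := EApp2 emul two (EApp2 eadd (EApp2 eadd (EApp2 eadd (eN0 (EVar 0) (EVar 1))
   (eN0 (EVar 1) (EVar 0))) (EVar 0)) (EVar 1)).
Definition ebnd := EApp1 epow2 eG.
Lemma den_bnd p q : den ebnd [:: p; q] = 2 ^ G p q.
Proof. rewrite /= den_pow2. do 12 rewrite ?[den emul _]den_mul ?[den eadd _]den_add. by rewrite /G /N0. Qed.
Opaque ebnd.

Definition ebodyB := EApp2 emul (EApp2 emul (EApp1 eanti (EVar 2)) (EApp1 eanti (EVar 0)))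
   (EApp2 eeq (EApp2 emul (EVar 4) (EVar 0)) (EApp2 emul (EVar 5) (EVar 2))).
Definition ebodyA := bsum ebodyB (EApp2 ebnd (EVar 2) (EVar 3)).
Definition esearch := EApp2 ele eone (bsum ebodyA (EApp2 ebnd (EVar 0) (EVar 1))).

Lemma sum_ex' N (F : 'I_N -> nat) : (0 < \sum_(i < N) F i) = [exists i, 0 < F i].
Proof.
rewrite lt0n sum_nat_eq0 negb_forall; apply: eq_existsb => i; by rewrite lt0n.
Qed.

Lemma den_search p q : den esearch [:: p; q] =
  [exists A : 'I_(2 ^ G p q), exists B : 'I_(2 ^ G p q), [&& antib A, antib B & p * B == q * A]].
Proof.
rewrite /= den_le (@den_bsum _ _ _ (fun A : nat =>
   \sum_(B < 2 ^ G p q) ([&& antib A, antib B & p * B == q * A] : nat))).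
  rewrite /= den_bnd sum_ex'. congr nat_of_bool. apply: eq_existsb => A.
  exact: (sum_ex (fun B : 'I_(2 ^ G p q) => [&& antib A, antib B & p * B == q * A])).
move=> A r. rewrite /ebodyA (@den_bsum _ _ _ (fun B : nat => ([&& antib A, antib B & p * B == q * A] : nat))).
  by rewrite /= den_bnd.
move=> B r'. rewrite /= !den_mul !den_anti den_eq.
by rewrite !mulnb andbA.
Qed.

Theorem theorem23 :
  exists P : rec, forall p q : nat, 1 <= p -> 1 <= q ->
    (exists b, b <= 1 /\ eval P [:: p; q] b) /\
    (eval P [:: p; q] 1 <->
       exists A B : nat, antipalindromic A /\ antipalindromic B /\ p * B = q * A).
Proof.
exists (comp 2 esearch) => p q Hp Hq.
have H := @comp_ok esearch 2 [:: p; q] erefl.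
split.
  exists (den esearch [:: p; q]); split; last exact/H.
  by rewrite den_search; case: ([exists _, _]).
split.
  move/H; rewrite den_search; case: existsP => // [[A /existsP [B /and3P [HA HB /eqP E]]]] _.
  by exists A, B; split; [exact/antibP | split; [exact/antibP|]].
move=> Hex. apply/H. rewrite den_search.
have [A [B [HA HB A1 B1 E]]] := bounded Hp Hq Hex.
case: existsP => // [[]]; exists (Ordinal HA); apply/existsP; exists (Ordinal HB) => /=.
by rewrite E eqxx andbT; apply/andP; split; apply/antibP.
Qed.
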